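(* Let $(\mathfrak g,[\cdot,\cdot]_{\mathfrak g},E)$ be an ENL algebra. Then there exists a pre-ENL algebra $(\mathfrak g,\{\cdot,\cdot\},E)$ whose sub-adjacent ENL algebra is $(\mathfrak g,[\cdot,\cdot]_{\mathfrak g},E)$ (i.e. $\{x,y\}-\{y,x\}=[x,y]_{\mathfrak g}$) if and only if there exist an ENE-representation $(W;T,\rho)$ of $(\mathfrak g,[\cdot,\cdot]_{\mathfrak g},E)$ and an invertible ENE-relative Rota–Baxter operator $K:W\to\mathfrak g$ with respect to $(W;T,\rho)$. In this case, the product $\{x,y\}_K:=K(\rho(x)K^{-1}y)$ makes $(\mathfrak g,\{\cdot,\cdot\}_K,E)$ a pre-ENL algebra.
   Context: Vector spaces are finite-dimensional over an algebraically closed field of characteristic zero. An ENL algebra is a Lie algebra with linear $E$ satisfying $E[x,y]=[x,Ey]$ for all $x,y$. An ENE-representation $(W;T,\rho)$ of $(\mathfrak g,E)$ is a representation $\rho:\mathfrak g\to\mathfrak{gl}(W)$ with linear $T$ such that $T(\rho(x)u)=\rho(Ex)u=\rho(x)(Tu)$. An ENE-relative Rota–Baxter operator is a linear $K:W\to\mathfrak g$ with $[Ku,Kv]_{\mathfrak g}=K(\rho(Ku)v-\rho(Kv)u)$ for all $u,v\in W$ and $E\circ K=K\circ T$. A pre-Lie algebra is a vector space with bilinear product $\{\cdot,\cdot\}$ satisfying $\{\{x,y\},z\}-\{x,\{y,z\}\}=\{\{y,x\},z\}-\{y,\{x,z\}\}$; a pre-ENL algebra $(\mathfrak g,\{\cdot,\cdot\},E)$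 is a pre-Lie algebra with linear $E$ such that $E\{x,y\}=\{Ex,y\}=\{x,Ey\}$ for all $x,y$; its sub-adjacent ENL algebra is $(\mathfrak g,[\cdot,\cdot],E)$ with $[x,y]=\{x,y\}-\{y,x\}$. *)

(* Defs.v *)
From HB Require Import structures.
From mathcomp Require Import all_boot all_order all_algebra.
Set Implicit Arguments. Unset Strict Implicit. Unset Printing Implicit Defensive.
Import GRing.Theory.
Local Open Scope ring_scope.

Section ENL.
Variable F : fieldType.

Definition lin_map (U V : lmodType F) (f : U -> V) : Prop :=
  forall (a : F) (u v : U), f (a *: u + v) = a *: f u + f v.

Definition bilin (U V Z : lmodType F) (b : U -> V -> Z) : Prop :=
  (forall u, lin_map (b u)) /\ (forall v, lin_map (fun u => b u v)).

Definition is_lie (g : lmodType F) (br : g -> g -> g) : Prop :=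
  [/\ bilin br, (forall x, br x x = 0) &
      (forall x y z, br x (br y z) + br y (br z x) + br z (br x y) = 0)].

Definition is_ENL (g : lmodType F) (br : g -> g -> g) (E : g -> g) : Prop :=
  [/\ is_lie br, lin_map E & forall x y, E (br x y) = br x (E y)].

Definition is_rep (g W : lmodType F) (br : g -> g -> g) (rho : g -> W -> W) : Prop :=
  bilin rho /\
  forall x y u, rho (br x y) u = rho x (rho y u) - rho y (rho x u).

Definition is_ENE_rep (g W : lmodType F) (br : g -> g -> g) (E : g -> g)
  (T : W -> W) (rho : g -> W -> W) : Prop :=
  [/\ is_rep br rho, lin_map T &
      forall x u, T (rho x u) = rho (E x) u /\ rho (E x) u = rho x (T u)].

Definition is_ENE_RB (g W : lmodType F) (br : g -> g -> g) (E : g -> g)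
  (T : W -> W) (rho : g -> W -> W) (K : W -> g) : Prop :=
  [/\ lin_map K,
      (forall u v, br (K u) (K v) = K (rho (K u) v - rho (K v) u)) &
      (forall u, E (K u) = K (T u))].

Definition is_preLie (g : lmodType F) (pr : g -> g -> g) : Prop :=
  bilin pr /\
  forall x y z, pr (pr x y) z - pr x (pr y z) = pr (pr y x) z - pr y (pr x z).

Definition is_preENL (g : lmodType F) (pr : g -> g -> g) (E : g -> g) : Prop :=
  [/\ is_preLie pr, lin_map E &
      forall x y, E (pr x y) = pr (E x) y /\ pr (E x) y = pr x (E y)].

Definition subadjacent (g : lmodType F) (pr br : g -> g -> g) : Prop :=
  forall x y, pr x y - pr y x = br x y.

End ENL.

(* Main.v *)
Require Import Defs.
From mathcomp Require Import all_boot all_order all_algebra.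
Local Open Scope ring_scope.
Import GRing.Theory.
Set Implicit Arguments. Unset Strict Implicit.

Section Aux.
Variable F : fieldType.

Lemma linD (U V : lmodType F) (f : U -> V) : lin_map f -> forall u v, f (u + v) = f u + f v.
Proof. by move=> H u v; have := H 1 u v; rewrite !scale1r. Qed.

Lemma lin0 (U V : lmodType F) (f : U -> V) : lin_map f -> f 0 = 0.
Proof. by move=> H; apply/(addrI (f 0)); rewrite -linD // !addr0. Qed.

Lemma linN (U V : lmodType F) (f : U -> V) : lin_map f -> forall u, f (- u) = - f u.
Proof. by move=> H u; have := H (-1) u 0; rewrite !addr0 lin0 // addr0 !scaleN1r. Qed.

Lemma linB (U V : lmodType F) (f : U -> V) : lin_map f -> forall u v, f (u - v) = f u - f v.
Proof. by move=> H u v; rewrite linD // linN. Qed.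

Lemma lin_inv (U V : lmodType F) (f : U -> V) finv : lin_map f -> cancel f finv -> cancel finv f ->
  lin_map finv.
Proof.
by move=> H c1 c2 a x y; rewrite -{1}(c2 x) -{1}(c2 y) -H c1.
Qed.
End Aux.

Lemma key (V : zmodType) (a b c d : V) : a - c = b - d -> a - b = c - d.
Proof. move=> h. by rewrite -[a](subrK c) h addrC !addrA addNr add0r addrC. Qed.

Theorem proposition7p7 (F : closedFieldType) (hF : [pchar F] =i pred0)
  (g : vectType F) (br : g -> g -> g) (E : g -> g) :
  is_ENL br E ->
  ((exists pr : g -> g -> g, is_preENL pr E /\ subadjacent pr br) <->
   (exists (W : vectType F) (T : W -> W) (rho : g -> W -> W) (K : W -> g),
       is_ENE_rep br E T rho /\ is_ENE_RB br E T rho K /\ bijective K))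
  /\
  (forall (W : vectType F) (T : W -> W) (rho : g -> W -> W) (K : W -> g)
          (Kinv : g -> W),
     is_ENE_rep br E T rho -> is_ENE_RB br E T rho K ->
     cancel K Kinv -> cancel Kinv K ->
     is_preENL (fun x y => K (rho x (Kinv y))) E /\
     subadjacent (fun x y => K (rho x (Kinv y))) br).
Proof.
move=> [Hlie HE HEbr].
have part2 : forall (W : vectType F) (T : W -> W) (rho : g -> W -> W) (K : W -> g)
          (Kinv : g -> W),
     is_ENE_rep br E T rho -> is_ENE_RB br E T rho K ->
     cancel K Kinv -> cancel Kinv K ->
     is_preENL (fun x y => K (rho x (Kinv y))) E /\
     subadjacent (fun x y => K (rho x (Kinv y))) br.
  move=> W T rho K Kinv [[[rl rr] rhoB] HT HTr] [HK HKb HKT] c1 c2.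
  have HKi := lin_inv HK c1 c2.
  have sub : subadjacent (fun x y => K (rho x (Kinv y))) br.
    move=> x y; rewrite -(c2 x) -(c2 y) HKb !c1 -linB //.
  split=> //; split.
  - split; first split.
    + move=> x a u v /=; by rewrite HKi rl HK.
    + move=> v a u w /=; by rewrite rr HK.
    + move=> x y z /=; rewrite !c1; apply: key.
      rewrite -!(linB HK) -(linB (rr (Kinv z))).
      have := sub x y => /= ->.
      by rewrite rhoB.
  - by [].
  - move=> x y /=; rewrite HKT; have [-> ->] := HTr x (Kinv y).
    have -> : Kinv (E y) = T (Kinv y) by rewrite -{1}(c2 y) HKT c1.
    by [].
split=> //; split.
- move=> [pr [[[[pl prr] Hpre] _ HEpr] Hsub]].
  exists g, E, pr, id; split; last split.
  + split=> //; split; first by split.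
    move=> x y u; rewrite -Hsub (linB (prr u)).
    apply: key; exact: Hpre.
  + split; [by move=> a u v | by move=> u v; rewrite Hsub | by []].
  + by exists id.
- move=> [W [T [rho [K [Hr [HRB [Kinv c1 c2]]]]]]].
  exists (fun x y => K (rho x (Kinv y))); by apply: (part2 W T rho K Kinv)...
Qed.
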